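(* Let $X$ be a compact $\mathbb{R}$-tree. Then no branch point of $X$ belongs to the support of the diversity-maximizing measure of $X$.
   Context: An $\mathbb{R}$-tree is a uniquely geodesic metric space (any two points $x,y$ are joined by a unique segment $\llbracket x,y\rrbracket$, a subset isometric to a compact interval with endpoints $x,y$) such that $\llbracket x,z\rrbracket\subseteq\llbracket x,y\rrbracket\cup\llbracket y,z\rrbracket$ for all $x,y,z$. The degree of a point $x$ is the number of connected components of $X\setminus\{x\}$; branch points are points of degree at least $3$. For a compact metric space $X$, the diversity-maximizing measure is a Borel probability measure $\mu$ minimizing $\int_X\int_X e^{-d(x,y)}\mu(dx)\mu(dy)$ over all Borel probability measures; compact $\mathbb{R}$-trees are of negative type, so such a minimizer exists and is unique. The support of $\mu$ is its closed support. *)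

(* Defs.v *)
From HB Require Import structures.
From mathcomp Require Import all_boot all_order all_algebra.
From mathcomp Require Import all_classical all_reals all_analysis.

Set Implicit Arguments. Unset Strict Implicit. Unset Printing Implicit Defensive.
Import Order.TTheory GRing.Theory Num.Theory.
Local Open Scope classical_set_scope.
Local Open Scope ring_scope.

(* A nonempty metric space: library metric structure (distance [mdist],
   balls/topology induced by [mdist]) together with a distinguished point,
   which the library's measurable-type hierarchy requires. *)
#[short(type="pointedMetricType")]
HB.structure Definition PointedMetric (K : numDomainType) :=
  { M of Metric K M & Pointed M }.

Section RTree.
Context {R : realType} (T : pointedMetricType R).
Local Notation d := (@mdist R T).

Definition is_segment (x y : T) (S : set T) : Prop :=
  exists g : R -> T,
    [/\ g 0 = x, g (d x y) = y,
        (forall s t : R, 0 <= s <= d x y -> 0 <= t <= d x y ->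
            d (g s) (g t) = `|s - t|) &
        S = g @` `[0, d x y]].

Definition uniquely_geodesic : Prop :=
  forall x y : T, exists! S : set T, is_segment x y S.

Definition R_tree : Prop :=
  uniquely_geodesic /\
  forall (x y z : T) (Sxz Sxy Syz : set T),
    is_segment x z Sxz -> is_segment x y Sxy -> is_segment y z Syz ->
    Sxz `<=` Sxy `|` Syz.

Definition branch_point (x : T) : Prop :=
  exists a b c : T,
    [/\ a <> x, b <> x, c <> x &
    [/\ connected_component [set~ x] a <> connected_component [set~ x] b,
        connected_component [set~ x] a <> connected_component [set~ x] c &
        connected_component [set~ x] b <> connected_component [set~ x] c]].

Definition borel := g_sigma_algebraType (@open T).

Definition energy (mu : probability borel R) : \bar R :=
  (\int[mu]_x \int[mu]_y (expR (- d x y))%:E)%E.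

Definition diversity_maximizing (mu : probability borel R) : Prop :=
  forall nu : probability borel R, (energy mu <= energy nu)%E.

Definition closed_support (mu : probability borel R) : set T :=
  [set x : T | forall U : set T, open U -> U x -> (0 < mu (U : set borel))%E].

End RTree.

Arguments energy {R T} mu.
Arguments diversity_maximizing {R T} mu.
Arguments closed_support {R T} mu _.

(* Main.v *)
Require Import Defs.
From HB Require Import structures.
From mathcomp Require Import all_boot all_order all_algebra.
From mathcomp Require Import all_classical all_reals all_analysis.
From mathcomp Require Import ring lra measurable_realfun.
Set Implicit Arguments. Unset Strict Implicit. Unset Printing Implicit Defensive.
Import Order.TTheory GRing.Theory Num.Theory numFieldNormedType.Exports.
Local Open Scope classical_set_scope.
Local Open Scope ring_scope.

Section S.
Context {R : realType} {T : pointedMetricType R}.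
Local Notation d := (@mdist R T).

Lemma dist_cont (x : T) : continuous (fun y : T => (d x y : R)).
Proof.
move=> y; apply/cvgrPdist_lt => e e0.
near=> z.
have : ball y e z by near: z; exact: nbhsx_ballx.
rewrite ballEmdist /= => yz.
rewrite (le_lt_trans _ yz)//.
have h1 := metric_triangle x y z.
have h2 := metric_triangle x z y.
rewrite (metric_sym z y) in h2.
rewrite ler_norml; apply/andP; split; lra.
Unshelve. all: by end_near.
Qed.

Definition K (x y : T) : R := expR (- d x y).

Lemma K_cont x : continuous (K x).
Proof.
move=> y; apply: continuous_comp; last exact: continuous_expR.
by apply: cvgN; exact: dist_cont.
Qed.

Lemma cont_meas (f : T -> R) : continuous f ->
  measurable_fun [set: borel T] (f : borel T -> R).
Proof.
move=> /continuousP cf; apply: (measurability _ (RGenOpens.measurableE R)).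
move=> _ [_ [a [b ->] <-]]; rewrite setTI.
apply: sub_sigma_algebra; apply: cf; exact: interval_open.
Qed.

Lemma K_meas x : measurable_fun [set: borel T] (fun y : borel T => ((K x y)%:E : \bar R)).
Proof. by apply/measurable_EFinP; apply: cont_meas; exact: K_cont. Qed.

Lemma lip_cont (f : T -> R) : (forall y z, `|f y - f z| <= d y z) -> continuous f.
Proof.
move=> Hf y; apply/cvgrPdist_lt => e e0.
near=> z.
have : ball y e z by near: z; exact: nbhsx_ballx.
rewrite ballEmdist /= => yz.
exact: le_lt_trans (Hf y z) yz.
Unshelve. all: by end_near.
Qed.

Lemma seg_conn (g : R -> T) (D s : R) :
  (forall u v, 0 <= u <= D -> 0 <= v <= D -> d (g u) (g v) = `|u - v|) ->
  0 <= s -> connected (g @` `[s, D]).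
Proof.
move=> Hg s0; apply: connected_continuous_connected.
  by apply/connected_intervalP; exact: interval_is_interval.
apply/subspace_continuousP => t /= tA.
apply/cvg_ballP => e e0.
rewrite near_withinE; near=> u => uA.
rewrite ballEmdist /= Hg.
- by near: u; exact: nbhsx_ballx.
- move: tA; rewrite /= in_itv /= => /andP[h1 h2]; apply/andP; split => //; exact: le_trans h1.
- move: uA; rewrite /= in_itv /= => /andP[h1 h2]; apply/andP; split => //; exact: le_trans h1.
Unshelve. all: by end_near.
Qed.

Lemma seg_ex (ug : uniquely_geodesic T) (x y : T) : exists g : R -> T,
  [/\ g 0 = x, g (d x y) = y &
    forall u v, 0 <= u <= d x y -> 0 <= v <= d x y -> d (g u) (g v) = `|u - v|].
Proof.
have [S [[g [g0 gD gi _]] _]] := ug x y.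
by exists g; split.
Qed.

Lemma itv_mem (a b u : R) : a <= u <= b -> u \in `[a, b].
Proof. by move=> h; rewrite in_itv /=. Qed.

Lemma in_comp (ug : uniquely_geodesic T) (x z y : T) :
  d z y < d z x + d x y -> connected_component [set~ x] z y.
Proof.
move=> H.
have [g [g0 gD gi]] := seg_ex ug z y.
have D0 : 0 <= d z y by exact: mdist_ge0.
apply: (@connected_component_max _ _ (g @` `[0, d z y])).
- by exists 0 => //; apply: itv_mem; rewrite lexx D0.
- move=> _ [u uA <-] gux.
  move: uA => /=; rewrite in_itv /= => /andP[u0 uD].
  have h1 : d z x = u.
    rewrite -g0 -gux gi ?lexx ?D0 ?u0 ?uD //.
    by rewrite sub0r normrN ger0_norm.
  have h2 : d x y = d z y - u.
    rewrite -{1}gux -{1}gD gi ?lexx ?D0 ?u0 ?uD //.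
    by rewrite distrC ger0_norm // subr_ge0.
  move: H; rewrite h1 h2; lra.
- by apply: seg_conn => //; move=> u v hu hv; exact: gi.
- by exists (d z y) => //; apply: itv_mem; rewrite lexx D0.
Qed.

Lemma near_pt (ug : uniquely_geodesic T) (x a : T) (s : R) :
  0 < s -> s <= d x a -> exists z : T,
  d x z = s /\ connected_component [set~ x] z a.
Proof.
move=> s0 sD.
have [g [g0 gD gi]] := seg_ex ug x a.
have D0 : 0 <= d x a by exact: mdist_ge0.
exists (g s); split.
  by rewrite -{1}g0 gi ?lexx ?D0 ?(ltW s0) ?sD // sub0r normrN gtr0_norm.
apply: (@connected_component_max _ _ (g @` `[s, d x a])).
- by exists s => //; apply: itv_mem; rewrite lexx sD.
- move=> _ [u uA <-] gux.
  move: uA => /=; rewrite in_itv /= => /andP[su uD].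
  have : d x (g u) = u.
    rewrite -{1}g0 gi ?lexx ?D0 ?uD //; last by rewrite (le_trans (ltW s0)).
    by rewrite sub0r normrN ger0_norm // (le_trans (ltW s0)).
  rewrite -gux mdistxx => h; move: su; rewrite -h; lra.
- by apply: seg_conn; [move=> u v hu hv; exact: gi | exact: ltW].
- by exists (d x a) => //; apply: itv_mem; rewrite lexx sD.
Qed.

Lemma K_ge0 x y : 0 <= K x y.
Proof. exact: expR_ge0. Qed.

Lemma K_le1 x y : K x y <= 1.
Proof. by rewrite /K expR_le1 oppr_le0 mdist_ge0. Qed.

Lemma K_sym x y : K x y = K y x.
Proof. by rewrite /K metric_sym. Qed.

Lemma Kmeas_R x : measurable_fun [set: borel T] (K x : borel T -> R).
Proof. apply: cont_meas; exact: K_cont. Qed.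

Variable mu : probability (borel T) R.

Lemma mfunZ (a : R) (f : borel T -> R) : measurable_fun setT f ->
  measurable_fun setT (fun y => a * f y).
Proof. by move=> mf; exact: (measurable_funM (measurable_cst a) mf). Qed.

Lemma mfunD (f g : borel T -> R) : measurable_fun setT f ->
  measurable_fun setT g -> measurable_fun setT (fun y => f y + g y).
Proof. by move=> mf mg; exact: (measurable_funD mf mg). Qed.

Lemma int_lin (a b : R) (f g : borel T -> R) : 0 <= a -> 0 <= b ->
  (forall y, 0 <= f y) -> (forall y, 0 <= g y) ->
  measurable_fun setT f -> measurable_fun setT g ->
  (\int[mu]_y ((a * f y + b * g y)%:E) =
   a%:E * \int[mu]_y (f y)%:E + b%:E * \int[mu]_y (g y)%:E)%E.
Proof.
move=> a0 b0 f0 g0 mf mg.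
under eq_integral do rewrite EFinD !EFinM.
rewrite ge0_integralD //.
- by rewrite !ge0_integralZl_EFin //; [move=> y _; rewrite lee_fin|
     exact/measurable_EFinP|move=> y _; rewrite lee_fin|exact/measurable_EFinP].
- by move=> y _; rewrite -EFinM lee_fin mulr_ge0.
- by apply/measurable_EFinP; apply: mfunZ.
- by move=> y _; rewrite -EFinM lee_fin mulr_ge0.
- by apply/measurable_EFinP; apply: mfunZ.
Qed.

Lemma int_le (f g : borel T -> R) :
  (forall y, 0 <= f y) -> (forall y, f y <= g y) ->
  measurable_fun setT f -> measurable_fun setT g ->
  (\int[mu]_y (f y)%:E <= \int[mu]_y (g y)%:E)%E.
Proof.
move=> f0 fg mf mg; apply: ge0_le_integral => //.
- by move=> y _; rewrite lee_fin.
- exact/measurable_EFinP.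
- exact/measurable_EFinP.
- by move=> y _; rewrite lee_fin.
Qed.

Lemma mu_setT : (mu [set: borel T] = 1)%E.
Proof. exact: probability_setT. Qed.

Lemma int_one : (\int[mu]_y (1%R)%:E = 1)%E.
Proof. by rewrite (integral_cst mu measurableT) mul1e; exact: probability_setT. Qed.

Lemma int_indic (U : set (borel T)) : measurable U ->
  (\int[mu]_y (\1_U y)%:E = mu U)%E.
Proof. by move=> mU; rewrite integral_indic // setIT. Qed.

Lemma int_scale (a : R) (f : borel T -> R) : 0 <= a ->
  (forall y, 0 <= f y) -> measurable_fun setT f ->
  (\int[mu]_y ((a * f y)%:E) = a%:E * \int[mu]_y (f y)%:E)%E.
Proof.
move=> a0 f0 mf; under eq_integral do rewrite EFinM.
rewrite ge0_integralZl_EFin //; [move=> y _; rewrite lee_fin //|exact/measurable_EFinP].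
Qed.

Definition Pr (x : T) : R := fine (\int[mu]_y (K x y)%:E).

Lemma P_bnd x : (0 <= \int[mu]_y (K x y)%:E <= 1)%E.
Proof.
apply/andP; split.
  by apply: integral_ge0 => y _; rewrite lee_fin K_ge0.
rewrite -int_one; apply: int_le.
- exact: K_ge0.
- exact: K_le1.
- exact: Kmeas_R.
- exact: measurable_cst.
Qed.

Lemma P_E x : (\int[mu]_y (K x y)%:E)%E = (Pr x)%:E.
Proof.
have /andP[h0 h1] := P_bnd x.
rewrite /Pr fineK // ge0_fin_numE //; exact: le_lt_trans h1 (ltey _).
Qed.

Lemma Pr_ge0 x : 0 <= Pr x.
Proof. by have /andP[h0 _] := P_bnd x; move: h0; rewrite P_E lee_fin. Qed.

Lemma Pr_le1 x : Pr x <= 1.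
Proof. by have /andP[_ h1] := P_bnd x; move: h1; rewrite P_E lee_fin. Qed.

Lemma K_lip x x' y : expR (- d x x') * K x y <= K x' y.
Proof.
rewrite /K -expRD ler_expR.
have := metric_triangle x' x y; rewrite (metric_sym x' x); lra.
Qed.

Lemma Pr_lip x x' : expR (- d x x') * Pr x <= Pr x'.
Proof.
rewrite -lee_fin EFinM -(P_E x) -(P_E x') -int_scale.
all: try (exact: expR_ge0); try (exact: K_ge0); try (exact: Kmeas_R).
apply: int_le.
- by move=> y; rewrite mulr_ge0 // ?K_ge0 // expR_ge0.
- move=> y; exact: K_lip.
- apply: mfunZ; exact: Kmeas_R.
- exact: Kmeas_R.
Qed.

Lemma Pr_lip2 y z : `|Pr y - Pr z| <= d y z.
Proof.
have h1 := Pr_lip y z; have h2 := Pr_lip z y.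
have e1 := expR_ge1Dx (- d y z); rewrite metric_sym in h2.
have := Pr_le1 y; have := Pr_le1 z; have := Pr_ge0 y; have := Pr_ge0 z.
have := mdist_ge0 y z.
move: (expR (- d y z)) e1 h1 h2 => E e1 h1 h2 *.
rewrite ler_norml; apply/andP; split; nra.
Qed.

Lemma Pr_cont : continuous Pr.
Proof. apply: lip_cont; exact: Pr_lip2. Qed.

Lemma Pr_meas : measurable_fun [set: borel T] (Pr : borel T -> R).
Proof. apply: cont_meas; exact: Pr_cont. Qed.

Lemma mnormalize_eq1 (m : {measure set (borel T) -> \bar R}) :
  m setT = 1%E -> mnormalize m mu = m.
Proof.
move=> h; apply/funext => U; rewrite /mnormalize h /=.
by rewrite onee_eq0 /= invr1 mule1.
Qed.

Definition cE : R := fine (\int[mu]_x (Pr x)%:E).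

Lemma cE_bnd : (0 <= \int[mu]_x (Pr x)%:E <= 1)%E.
Proof.
apply/andP; split.
  by apply: integral_ge0 => y _; rewrite lee_fin Pr_ge0.
rewrite -int_one; apply: int_le.
- exact: Pr_ge0.
- exact: Pr_le1.
- exact: Pr_meas.
- exact: measurable_cst.
Qed.

Lemma cE_E : (\int[mu]_x (Pr x)%:E)%E = cE%:E.
Proof.
have /andP[h0 h1] := cE_bnd.
rewrite /cE fineK // ge0_fin_numE //; exact: le_lt_trans h1 (ltey _).
Qed.

Lemma cE_ge0 : 0 <= cE.
Proof. by have /andP[h0 _] := cE_bnd; move: h0; rewrite cE_E lee_fin. Qed.

Lemma energy_mu : energy mu = cE%:E.
Proof.
rewrite -cE_E /energy; apply: eq_integral => x _; exact: P_E.
Qed.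

Lemma KxK (z : T) : measurable_fun [set: borel T] (fun x : borel T => K x z).
Proof.
rewrite (_ : (fun x => K x z) = K z); first exact: Kmeas_R.
by apply/funext => x; rewrite K_sym.
Qed.

Lemma int_Kz (z : T) : (\int[mu]_x (K x z)%:E)%E = (Pr z)%:E.
Proof.
rewrite -P_E; apply: eq_integral => x _; by rewrite K_sym.
Qed.

Section mix.
Variables (z : T) (t : R) (h1 : 0 <= 1 - t) (h2 : 0 <= t).

Definition mixm := measure_add (mscale (NngNum h1) mu)
  (mscale (NngNum h2) (@dirac _ (borel T) z R)).

Lemma mixm_setT : mixm setT = 1%E.
Proof.
rewrite /mixm measure_addE.
change (((1-t)%:E * mu setT + t%:E * (@dirac _ (borel T) z R) setT) = 1)%E.
rewrite diracE mem_set //.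
rewrite (_ : mu _ = 1%E); last exact: probability_setT.
by rewrite !mule1 -EFinD subrK.
Qed.

Definition nu := mnormalize mixm mu.

Lemma nu_eq : nu = mixm.
Proof. exact: (mnormalize_eq1 mixm_setT). Qed.

Lemma int_mix (f : borel T -> \bar R) : (forall y, 0 <= f y)%E ->
  measurable_fun setT f ->
  (\int[mixm]_y f y = (1 - t)%:E * \int[mu]_y f y + t%:E * f z)%E.
Proof.
move=> f0 mf.
rewrite ge0_integral_measure_add //.
rewrite (ge0_integral_mscale mu measurableT (NngNum h1) mf) //.
rewrite (ge0_integral_mscale _ measurableT (NngNum h2) mf) //.
rewrite integral_dirac // diracE mem_set // mul1e //.
Qed.

Lemma int_nu (f : borel T -> \bar R) :
  (\int[nu]_y f y = \int[mixm]_y f y)%E.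
Proof. by rewrite -nu_eq. Qed.

Lemma energy_nu : energy nu =
  ((1 - t) * ((1 - t) * cE + t * Pr z) + t * ((1 - t) * Pr z + t))%:E.
Proof.
rewrite /energy int_nu.
transitivity (\int[mixm]_x (((1 - t) * Pr x + t * K x z)%:E))%E.
  apply: eq_integral => x _.
  rewrite int_nu int_mix //.
  - by rewrite (P_E x) -!EFinM -EFinD.
  - exact: K_meas.
rewrite int_mix //.
- rewrite int_lin //.
  + rewrite cE_E int_Kz /K mdistxx oppr0 expR0 mulr1.
    by [].
  + exact: Pr_ge0.
  + by move=> y; exact: K_ge0.
  + exact: Pr_meas.
  + exact: KxK.
- by move=> y; rewrite lee_fin addr_ge0 // mulr_ge0 // ?Pr_ge0 ?K_ge0.
- apply/measurable_EFinP; apply: mfunD; apply: mfunZ; [exact: Pr_meas|exact: KxK].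
Qed.
End mix.

Lemma cE_le1 : cE <= 1.
Proof. by have /andP[_ h1] := cE_bnd; move: h1; rewrite cE_E lee_fin. Qed.

Lemma foc (Hdm : diversity_maximizing mu) z : cE <= Pr z.
Proof.
rewrite leNgt; apply/negP => hz.
set t := (cE - Pr z) / 2.
have hp0 := Pr_ge0 z; have hc1 := cE_le1.
have h2 : 0 <= t by rewrite /t; lra.
have h1 : 0 <= 1 - t by rewrite /t; lra.
have := Hdm (nu z h1 h2).
rewrite energy_mu energy_nu lee_fin.
have ht : t * 2 = cE - Pr z by rewrite /t; field.
clear h1; move: (Pr z) (cE) t ht hz hp0 hc1 h2 => p c u hu hpc hp hc hu0 H.
have hu1 : 0 < u by lra.
have : u * (2 * (c - p) - u * (c - 2 * p + 1)) <= 0 by nra.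
nra.
Qed.

Lemma ind_ge0 (U : set (borel T)) y : 0 <= \1_U y :> R.
Proof. by rewrite indicE ler0n. Qed.

Lemma open_lt (f : T -> R) (r : R) : continuous f -> open [set y | f y < r].
Proof.
move=> /continuousP cf.
have -> : [set y | f y < r] = f @^-1` `]-oo, r[.
  by apply/seteqP; split => y /=; rewrite in_itv /=.
by apply: cf; exact: interval_open.
Qed.

Lemma supp_le (Hdm : diversity_maximizing mu) x :
  closed_support mu x -> Pr x <= cE.
Proof.
move=> Hs; rewrite leNgt; apply/negP => hx.
set e := (Pr x - cE) / 2.
have e0 : 0 < e by rewrite /e; lra.
have he : e * 2 = Pr x - cE by rewrite /e; field.
pose U := [set y : T | d x y < e].
have oU : open U by apply: open_lt; exact: dist_cont.
have Ux : U x by rewrite /U /= mdistxx.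
have mU : measurable (U : set (borel T)) by apply: sub_sigma_algebra.
have hU := Hs U oU Ux.
have hU1 : (mu (U : set (borel T)) <= 1)%E by exact: probability_le1.
have Ufin : mu (U : set (borel T)) = (fine (mu (U : set (borel T))))%:E.
  apply/esym/fineK; rewrite ge0_fin_numE; [exact: le_lt_trans hU1 (ltey _)|exact: ltW].
have key : (cE%:E + e%:E * mu (U : set (borel T)) <= cE%:E)%E.
  rewrite -{2}cE_E -(int_indic mU) -[X in (X%:E + _)%E]mulr1 EFinM -int_one.
  rewrite -int_lin.
  - apply: int_le.
    + move=> y; apply: addr_ge0; first by rewrite mulr1 cE_ge0.
      by apply: mulr_ge0; [exact: ltW|exact: ind_ge0].
    + move=> y; rewrite indicE; case: (boolP (y \in U)) => yU /=.
      * rewrite mulr1; move: yU; rewrite inE /U /= => yU.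
        have := Pr_lip2 x y; have := foc Hdm y.
        rewrite ler_norml => /[swap] /andP[_ h] _; lra.
      * by rewrite mulr0 addr0 mulr1; exact: foc.
    + apply: mfunD; apply: mfunZ; [exact: measurable_cst|exact: measurable_indic].
    + exact: Pr_meas.
  - exact: cE_ge0.
  - exact: ltW.
  - by [].
  - by move=> y; exact: ind_ge0.
  - exact: measurable_cst.
  - exact: measurable_indic.
move: key; rewrite Ufin -EFinM -EFinD lee_fin.
move: hU; rewrite Ufin lte_fin => hU.
have : 0 < e * fine (mu (U : set (borel T))) by exact: mulr_gt0.
lra.
Qed.

Lemma disj (ug : uniquely_geodesic T) (x a b za zb y : T) :
  connected_component [set~ x] a <> connected_component [set~ x] b ->
  connected_component [set~ x] za a -> connected_component [set~ x] zb b ->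
  d za y < d za x + d x y -> d zb y < d zb x + d x y -> False.
Proof.
move=> hab ha hb ya yb; apply: hab.
have ea := same_connected_component ha.
have eb := same_connected_component hb.
have e1 := same_connected_component (in_comp ug ya).
have e2 := same_connected_component (in_comp ug yb).
by rewrite -ea -eb e1 e2.
Qed.

Definition AU (x : T) (U : set (borel T)) : R :=
  fine (\int[mu]_y (\1_U y * K x y)%:E).

Lemma AU_E x (U : set (borel T)) : measurable U ->
  (\int[mu]_y (\1_U y * K x y)%:E)%E = (AU x U)%:E.
Proof.
move=> mU.
have h0 : (0 <= \int[mu]_y (\1_U y * K x y)%:E)%E.
  by apply: integral_ge0 => y _; rewrite lee_fin mulr_ge0 // ?ind_ge0 ?K_ge0.
have h1 : (\int[mu]_y (\1_U y * K x y)%:E <= 1)%E.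
  rewrite -int_one; apply: int_le.
  - by move=> y; rewrite mulr_ge0 // ?ind_ge0 ?K_ge0.
  - move=> y; rewrite indicE; case: (_ \in _) => /=.
      by rewrite mul1r K_le1.
    by rewrite mul0r.
  - by apply: measurable_funM; [exact: measurable_indic|exact: Kmeas_R].
  - exact: measurable_cst.
rewrite /AU fineK // ge0_fin_numE //; exact: le_lt_trans h1 (ltey _).
Qed.

Lemma mAUf x (U : set (borel T)) : measurable U ->
  measurable_fun setT (fun y : borel T => \1_U y * K x y).
Proof.
by move=> mU; apply: measurable_funM; [exact: measurable_indic|exact: Kmeas_R].
Qed.

Lemma S_meas (z x : T) : measurable ([set y | d z y < d z x + d x y] : set (borel T)).
Proof.
apply: sub_sigma_algebra.
have -> : [set y | d z y < d z x + d x y] = [set y | d z y - d x y < d z x].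
  by apply/seteqP; split => y /=; lra.
apply: open_lt => y; apply: cvgB; exact: dist_cont.
Qed.

Lemma branch_ineq (Hdm : diversity_maximizing mu) (x z : T) :
  cE <= expR (- d z x) * Pr x +
        (expR (d z x) - expR (- d z x)) * AU x [set y | d z y < d z x + d x y].
Proof.
set S : set (borel T) := [set y | d z y < d z x + d x y].
have mS : measurable S by exact: S_meas.
have hs := mdist_ge0 z x.
have hv : expR (- d z x) <= expR (d z x) by rewrite ler_expR; lra.
apply: (le_trans (foc Hdm z)).
rewrite -lee_fin -(P_E z) EFinD EFinM EFinM -(P_E x) -(AU_E x mS).
rewrite -int_scale; last 3 first.
- exact: expR_ge0.
- exact: K_ge0.
- exact: Kmeas_R.
rewrite -int_scale; last 3 first.
- by rewrite subr_ge0.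
- by move=> y; rewrite mulr_ge0 // ?ind_ge0 ?K_ge0.
- exact: mAUf.
rewrite -ge0_integralD; first last.
- by apply/measurable_EFinP; apply: mfunZ; exact: mAUf.
- by move=> y _; rewrite lee_fin !mulr_ge0 // ?ind_ge0 ?K_ge0 // subr_ge0.
- by apply/measurable_EFinP; apply: mfunZ; exact: Kmeas_R.
- by move=> y _; rewrite lee_fin mulr_ge0 // ?expR_ge0 ?K_ge0.
- exact: measurableT.
apply: int_le.
- exact: K_ge0.
- move=> y; rewrite indicE.
  have kl := K_lip z x y.
  case: (boolP (y \in S)) => yS /=.
  + rewrite mul1r.
    have e1 : expR (d z x) * expR (- d z x) = 1 by rewrite -expRD subrr expR0.
    have e2 : 0 <= K z y by exact: K_ge0.
    have e3 : 0 < expR (d z x) by exact: expR_gt0.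
    have : K z y <= expR (d z x) * K x y.
      by rewrite -[leLHS]mul1r -e1 -mulrA ler_wpM2l // ?expR_ge0.
    nra.
  + rewrite mul0r mulr0 addr0.
    have yS2 : d z x + d x y <= d z y.
      by rewrite leNgt; apply/negP => h; move/negP: yS; apply; rewrite inE.
    rewrite /K -expRD ler_expR; lra.
- exact: Kmeas_R.
- by apply: mfunD; apply: mfunZ; [exact: Kmeas_R|exact: mAUf].
Qed.

Lemma sum3 x (S1 S2 S3 : set (borel T)) : measurable S1 -> measurable S2 ->
  measurable S3 -> (forall y, \1_S1 y + \1_S2 y + \1_S3 y <= 1 :> R) ->
  AU x S1 + AU x S2 + AU x S3 <= Pr x.
Proof.
move=> m1 m2 m3 H.
rewrite -lee_fin !EFinD -(AU_E x m1) -(AU_E x m2) -(AU_E x m3) -(P_E x).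
rewrite -ge0_integralD; first last.
- by apply/measurable_EFinP; exact: mAUf.
- by move=> y _; rewrite lee_fin mulr_ge0 // ?ind_ge0 ?K_ge0.
- by apply/measurable_EFinP; exact: mAUf.
- by move=> y _; rewrite lee_fin mulr_ge0 // ?ind_ge0 ?K_ge0.
- exact: measurableT.
rewrite -ge0_integralD; first last.
- by apply/measurable_EFinP; exact: mAUf.
- by move=> y _; rewrite lee_fin mulr_ge0 // ?ind_ge0 ?K_ge0.
- by apply/measurable_EFinP; apply: mfunD; exact: mAUf.
- by move=> y _; rewrite lee_fin addr_ge0 // mulr_ge0 // ?ind_ge0 ?K_ge0.
- exact: measurableT.
apply: int_le.
- by move=> y; rewrite !addr_ge0 // mulr_ge0 // ?ind_ge0 ?K_ge0.
- move=> y; rewrite -!mulrDl -[leRHS]mul1r ler_wpM2r //; first exact: K_ge0.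
- by apply: mfunD; [apply: mfunD|]; exact: mAUf.
- exact: Kmeas_R.
Qed.

Lemma Pr_pos x : closed_support mu x -> 0 < Pr x.
Proof.
move=> Hs.
pose U := [set y : T | d x y < 1].
have oU : open U by apply: open_lt; exact: dist_cont.
have Ux : U x by rewrite /U /= mdistxx.
have mU : measurable (U : set (borel T)) by apply: sub_sigma_algebra.
have hU := Hs U oU Ux.
have hU1 : (mu (U : set (borel T)) <= 1)%E by exact: probability_le1.
have Ufin : mu (U : set (borel T)) = (fine (mu (U : set (borel T))))%:E.
  apply/esym/fineK; rewrite ge0_fin_numE; [exact: le_lt_trans hU1 (ltey _)|exact: ltW].
have key : ((expR (-1))%:E * mu (U : set (borel T)) <= (Pr x)%:E)%E.
  rewrite -(P_E x) -(int_indic mU) -int_scale.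
  - apply: int_le.
    + by move=> y; rewrite mulr_ge0 // ?expR_ge0 ?ind_ge0.
    + move=> y; rewrite indicE; case: (boolP (y \in U)) => yU /=.
      * rewrite mulr1; move: yU; rewrite inE /U /= => yU.
        by rewrite /K ler_expR; lra.
      * by rewrite mulr0; exact: K_ge0.
    + by apply: mfunZ; exact: measurable_indic.
    + exact: Kmeas_R.
  - exact: expR_ge0.
  - by move=> y; exact: ind_ge0.
  - exact: measurable_indic.
move: key; rewrite Ufin -EFinM lee_fin.
move: hU; rewrite Ufin lte_fin => hU.
have : 0 < expR (-1) * fine (mu (U : set (borel T))) by rewrite mulr_gt0 // expR_gt0.
lra.
Qed.

Lemma main_sec (ug : uniquely_geodesic T) (Hdm : diversity_maximizing mu) (x : T) :
  branch_point x -> ~ closed_support mu x.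
Proof.
move=> [a [b [c [ax bx cx [hab hac hbc]]]]] Hs.
have hPx : Pr x = cE by apply/le_anti; rewrite supp_le // foc.
have hpos := Pr_pos Hs.
have dpos (w : T) : w <> x -> 0 < d x w.
  by move=> wx; rewrite mdist_gt0; apply/eqP => h; apply: wx; rewrite h.
have da := dpos a ax; have db := dpos b bx; have dc := dpos c cx.
set s := Num.min (1/4) (Num.min (d x a) (Num.min (d x b) (d x c))).
have s0 : 0 < s by rewrite /s !lt_min da db dc andbT /=; lra.
have s14 : s <= 1/4 by rewrite /s ge_min lexx.
have sa : s <= d x a by rewrite /s ge_min ge_min lexx orbT.
have sb : s <= d x b by rewrite /s !ge_min lexx !orbT.
have sc : s <= d x c by rewrite /s !ge_min lexx !orbT.
have [za [dza ca]] := near_pt ug s0 sa.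
have [zb [dzb cb]] := near_pt ug s0 sb.
have [zc [dzc cc]] := near_pt ug s0 sc.
have H (y : borel T) :
   \1_[set y | d za y < d za x + d x y] y + \1_[set y | d zb y < d zb x + d x y] y
   + \1_[set y | d zc y < d zc x + d x y] y <= 1 :> R.
  rewrite !indicE.
  case: (boolP (y \in _)) => ya; case: (boolP (y \in _)) => yb;
    case: (boolP (y \in _)) => yc; rewrite ?inE /= in ya yb yc;
    rewrite /= ?mulr1n ?mulr0n ?addr0 ?add0r //.
  - by case: (disj ug hab ca cb ya yb).
  - by case: (disj ug hab ca cb ya yb).
  - by case: (disj ug hac ca cc ya yc).
  - by case: (disj ug hbc cb cc yb yc).
have hsum := sum3 x (S_meas za x) (S_meas zb x) (S_meas zc x) H.
have ha := branch_ineq Hdm x za.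
have hb := branch_ineq Hdm x zb.
have hc := branch_ineq Hdm x zc.
move: hsum ha hb hc.
move: (AU x [set y | d za y < d za x + d x y]) => Aa.
move: (AU x [set y | d zb y < d zb x + d x y]) => Ab.
move: (AU x [set y | d zc y < d zc x + d x y]) => Ac.
rewrite (metric_sym za x) (metric_sym zb x) (metric_sym zc x) dza dzb dzc hPx.
move=> hsum ha hb hc.
have huv : expR s * expR (- s) = 1 by rewrite -expRD subrr expR0.
have hv := expR_ge1Dx (- s).
have hu1 : 1 < expR s by rewrite expR_gt1.
move: (expR s) (expR (- s)) huv hv hu1 ha hb hc => u v huv hv hu1 ha hb hc.
have hv34 : 3/4 <= v by lra.
have hu43 : u <= 4/3 by nra.
have hpos2 : 0 < 3 - 2 * v - u by nra.
have : cE * (3 - 2 * v - u) <= 0 by nra.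
nra.
Qed.

End S.

Theorem theorem5p1 (R : realType) (T : pointedMetricType R)
  (mu : probability (borel T) R) :
  compact [set: T] -> R_tree T -> diversity_maximizing mu ->
  forall x : T, branch_point x -> ~ closed_support mu x.
Proof.
move=> _ [ug _] Hdm x; exact: (main_sec ug Hdm).
Qed.
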